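(* Let $n\ge1$, $q\in\mathbb{C}$ with $0<|q|<1$, and $0<r<\frac{1-|q|}{|1-q|}$. For every $\sigma\in\mathbb{S}_n$, $$\Big(\frac{1}{2\pi i}\Big)^n\oint_{\mathcal{C}_r}\cdots\oint_{\mathcal{C}_r}A_\sigma\prod_{i=1}^n z_i^{-1}\,dz_1\cdots dz_n=q^{\mathrm{inv}(\sigma)},$$ where $\mathrm{inv}(\sigma)$ is the number of inversions of $\sigma$.
   Context: $\mathcal{C}_r$ is the positively oriented circle of radius $r$ centered at $0$. For $1\le\alpha<\beta\le n$ put $S_{\beta\alpha}=-\dfrac{z_\beta-qz_\alpha-(1-q)z_\alpha z_\beta}{z_\alpha-qz_\beta-(1-q)z_\alpha z_\beta}$. An inversion of $\sigma\in\mathbb{S}_n$ is a pair $(\alpha,\beta)$ with $1\le\alpha<\beta\le n$ and $\sigma^{-1}(\beta)<\sigma^{-1}(\alpha)$. $A_\sigma=\prod_{(\alpha,\beta)\text{ inversion of }\sigma}S_{\beta\alpha}$. *)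

(* Defs.v *)
From Stdlib Require Import Reals Lra List Permutation Arith.
Import ListNotations.
Open Scope R_scope.

Definition Cx : Type := (R * R)%type.
Definition RC (x : R) : Cx := (x, 0).
Definition Czero : Cx := (0, 0).
Definition Cone : Cx := (1, 0).
Definition Ci : Cx := (0, 1).
Definition Cadd (z w : Cx) : Cx := (fst z + fst w, snd z + snd w).
Definition Copp (z : Cx) : Cx := (- fst z, - snd z).
Definition Csub (z w : Cx) : Cx := Cadd z (Copp w).
Definition Cmul (z w : Cx) : Cx :=
  (fst z * fst w - snd z * snd w, fst z * snd w + snd z * fst w).
Definition Cinv (z : Cx) : Cx :=
  (fst z / (fst z ^ 2 + snd z ^ 2), - snd z / (fst z ^ 2 + snd z ^ 2)).
Definition Cdiv (z w : Cx) : Cx := Cmul z (Cinv w).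
Fixpoint Cpow (z : Cx) (n : nat) : Cx :=
  match n with O => Cone | S k => Cmul z (Cpow z k) end.
Definition Cnorm (z : Cx) : R := sqrt (fst z ^ 2 + snd z ^ 2).

Definition circ (r theta : R) : Cx := (r * cos theta, r * sin theta).

Definition Cprod (l : list nat) (f : nat -> Cx) : Cx :=
  fold_right (fun k acc => Cmul (f k) acc) Cone l.

Definition RInt_val (f : R -> R) (a b v : R) : Prop :=
  exists pr : Riemann_integrable f a b, RiemannInt pr = v.

(* v = \oint_{C_r} h(z) dz, with the positive parametrisation
   z = r e^{i theta}, theta in [0, 2 pi], dz = i r e^{i theta} d theta *)
Definition CircInt (r : R) (h : Cx -> Cx) (v : Cx) : Prop :=
  RInt_val (fun t => fst (Cmul (h (circ r t)) (Cmul Ci (circ r t)))) 0 (2 * PI) (fst v) /\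
  RInt_val (fun t => snd (Cmul (h (circ r t)) (Cmul Ci (circ r t)))) 0 (2 * PI) (snd v).

Definition cons_fun (w : Cx) (z : nat -> Cx) : nat -> Cx :=
  fun k => match k with O => w | S k' => z k' end.

(* IterCirc r n F v : v = \oint_{C_r} ... \oint_{C_r} F(z_0,...,z_{n-1}) dz ... dz
   (iterated; variable z_0 outermost).  Variables with index >= n are unused. *)
Fixpoint IterCirc (r : R) (n : nat) (F : (nat -> Cx) -> Cx) (v : Cx) : Prop :=
  match n with
  | O => F (fun _ => Czero) = v
  | S m => exists g : Cx -> Cx,
      (forall t : R, IterCirc r m (fun z => F (cons_fun (circ r t) z)) (g (circ r t))) /\
      CircInt r g v
  end.

(* sigma in S_n is given in one-line notation as a list [sigma(0); ...; sigma(n-1)]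
   (indices shifted to 0..n-1); sigma^{-1}(b) is the position of b in that list. *)
Fixpoint pos (b : nat) (l : list nat) : nat :=
  match l with
  | [] => O
  | x :: l' => if Nat.eqb x b then O else S (pos b l')
  end.

Definition is_inversion (sigma : list nat) (a b : nat) : bool :=
  Nat.ltb a b && Nat.ltb (pos b sigma) (pos a sigma).

Definition inv_count (n : nat) (sigma : list nat) : nat :=
  fold_right Nat.add O
    (map (fun a => fold_right Nat.add O
        (map (fun b => if is_inversion sigma a b then 1%nat else 0%nat) (seq 0 n)))
      (seq 0 n)).

Definition Sba (q : Cx) (z : nat -> Cx) (b a : nat) : Cx :=
  Copp (Cdiv (Csub (Csub (z b) (Cmul q (z a))) (Cmul (Csub Cone q) (Cmul (z a) (z b))))
             (Csub (Csub (z a) (Cmul q (z b))) (Cmul (Csub Cone q) (Cmul (z a) (z b))))).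

Definition A_sigma (n : nat) (q : Cx) (sigma : list nat) (z : nat -> Cx) : Cx :=
  Cprod (seq 0 n) (fun a => Cprod (seq 0 n) (fun b =>
    if is_inversion sigma a b then Sba q z b a else Cone)).

(* Main.v *)
From Coquelicot Require Import Coquelicot.
From Stdlib Require Import Reals Lra List Permutation Arith Lia FunctionalExtensionality.
Require Import Defs.
Import ListNotations.
Open Scope R_scope.

Lemma dplus (f g : R -> R) (x a b : R) : is_derive f x a -> is_derive g x b -> is_derive (fun y => f y + g y) x (a + b).
Proof. intros H1 H2. apply is_derive_Reals. apply is_derive_Reals in H1, H2.
  exact (derivable_pt_lim_plus f g x a b H1 H2). Qed.
Lemma dminus (f g : R -> R) (x a b : R) : is_derive f x a -> is_derive g x b -> is_derive (fun y => f y - g y) x (a - b).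
Proof. intros H1 H2. apply is_derive_Reals. apply is_derive_Reals in H1, H2.
  exact (derivable_pt_lim_minus f g x a b H1 H2). Qed.
Lemma dmult (f g : R -> R) (x a b : R) : is_derive f x a -> is_derive g x b -> is_derive (fun y => f y * g y) x (a * g x + f x * b).
Proof. intros H1 H2. apply is_derive_Reals. apply is_derive_Reals in H1, H2.
  exact (derivable_pt_lim_mult f g x a b H1 H2). Qed.
Lemma dopp (f : R -> R) (x a : R) : is_derive f x a -> is_derive (fun y => - f y) x (- a).
Proof. intros H1. apply is_derive_Reals. apply is_derive_Reals in H1.
  exact (derivable_pt_lim_opp f x a H1). Qed.
Lemma dconst (c x : R) : is_derive (fun _ : R => c) x 0.
Proof. apply is_derive_Reals. apply derivable_pt_lim_const. Qed.
Lemma did (x : R) : is_derive (fun y : R => y) x 1.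
Proof. apply is_derive_Reals. apply derivable_pt_lim_id. Qed.
Lemma dcos (x : R) : is_derive cos x (- sin x).
Proof. apply is_derive_Reals. apply derivable_pt_lim_cos. Qed.
Lemma dsin (x : R) : is_derive sin x (cos x).
Proof. apply is_derive_Reals. apply derivable_pt_lim_sin. Qed.
Lemma dinv (f : R -> R) (x a : R) : is_derive f x a -> f x <> 0 -> is_derive (fun y => / f y) x (- a / f x ^ 2).
Proof. apply is_derive_inv. Qed.
Lemma dval (f : R -> R) (x a b : R) : is_derive f x a -> a = b -> is_derive f x b.
Proof. intros H ->; exact H. Qed.
Lemma dext (f g : R -> R) (x a : R) : (forall y, f y = g y) -> is_derive f x a -> is_derive g x a.
Proof. intros; eapply is_derive_ext; eauto. Qed.

Definition Good (R0 : R) (P : Cx -> Cx) (D : R -> R -> Cx) : Prop :=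
  forall s t, Rabs s < R0 ->
  is_derive (fun u : R => fst (P (circ u t))) s (fst (D s t)) /\
  is_derive (fun u : R => snd (P (circ u t))) s (snd (D s t)) /\
  is_derive (fun v : R => fst (P (circ s v))) t (- s * snd (D s t)) /\
  is_derive (fun v : R => snd (P (circ s v))) t (s * fst (D s t)) /\
  continuity_2d_pt (fun u v => fst (D u v)) s t /\
  continuity_2d_pt (fun u v => snd (D u v)) s t /\
  continuity_2d_pt (fun u v => fst (P (circ u v))) s t /\
  continuity_2d_pt (fun u v => snd (P (circ u v))) s t.

Definition GoodE R0 P := exists D, Good R0 P D.
Ltac spl8 := refine (conj _ (conj _ (conj _ (conj _ (conj _ (conj _ (conj _ _))))))).

Lemma c2cos s t : continuity_2d_pt (fun _ v => cos v) s t.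
Proof. apply (continuity_1d_2d_pt_comp cos (fun _ v => v)). apply continuity_cos. apply continuity_2d_pt_id2. Qed.
Lemma c2sin s t : continuity_2d_pt (fun _ v => sin v) s t.
Proof. apply (continuity_1d_2d_pt_comp sin (fun _ v => v)). apply continuity_sin. apply continuity_2d_pt_id2. Qed.

Lemma Good_const R0 c : GoodE R0 (fun _ => c).
Proof. exists (fun _ _ => (0,0)). intros s t _; simpl.
  spl8; try (apply continuity_2d_pt_const); (eapply dval; [apply dconst| cbv beta; ring]). Qed.

Lemma Good_id R0 : GoodE R0 (fun w => w).
Proof. exists (fun _ v => (cos v, sin v)). intros s t _; unfold circ; simpl.
  spl8.
  - eapply dval. apply dmult. apply did. apply dconst. cbv beta; ring.
  - eapply dval. apply dmult. apply did. apply dconst. cbv beta; ring.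
  - eapply dval. apply dmult. apply dconst. apply dcos. cbv beta; ring.
  - eapply dval. apply dmult. apply dconst. apply dsin. cbv beta; ring.
  - apply c2cos.
  - apply c2sin.
  - apply continuity_2d_pt_mult. apply continuity_2d_pt_id1. apply c2cos.
  - apply continuity_2d_pt_mult. apply continuity_2d_pt_id1. apply c2sin.
Qed.

Lemma Good_add R0 P1 P2 : GoodE R0 P1 -> GoodE R0 P2 -> GoodE R0 (fun w => Cadd (P1 w) (P2 w)).
Proof. intros [D1 H1] [D2 H2]. exists (fun u v => Cadd (D1 u v) (D2 u v)).
  intros s t Hs. destruct (H1 s t Hs) as (a1&b1&c1&d1&e1&f1&g1&h1).
  destruct (H2 s t Hs) as (a2&b2&c2&d2&e2&f2&g2&h2). unfold Cadd; simpl.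
  spl8.
  - apply dplus; auto.
  - apply dplus; auto.
  - eapply dval. apply dplus; eauto. cbv beta; ring.
  - eapply dval. apply dplus; eauto. cbv beta; ring.
  - apply continuity_2d_pt_plus; auto.
  - apply continuity_2d_pt_plus; auto.
  - apply continuity_2d_pt_plus; auto.
  - apply continuity_2d_pt_plus; auto.
Qed.

Lemma Good_opp R0 P1 : GoodE R0 P1 -> GoodE R0 (fun w => Copp (P1 w)).
Proof. intros [D1 H1]. exists (fun u v => Copp (D1 u v)).
  intros s t Hs. destruct (H1 s t Hs) as (a1&b1&c1&d1&e1&f1&g1&h1).
  unfold Copp; simpl.
  spl8.
  - apply dopp; auto.
  - apply dopp; auto.
  - eapply dval. apply dopp; eauto. cbv beta; ring.
  - eapply dval. apply dopp; eauto. cbv beta; ring.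
  - apply continuity_2d_pt_opp; auto.
  - apply continuity_2d_pt_opp; auto.
  - apply continuity_2d_pt_opp; auto.
  - apply continuity_2d_pt_opp; auto.
Qed.

Lemma Good_mul R0 P1 P2 : GoodE R0 P1 -> GoodE R0 P2 -> GoodE R0 (fun w => Cmul (P1 w) (P2 w)).
Proof. intros [D1 H1] [D2 H2].
  exists (fun u v => Cadd (Cmul (D1 u v) (P2 (circ u v))) (Cmul (P1 (circ u v)) (D2 u v))).
  intros s t Hs. destruct (H1 s t Hs) as (a1&b1&c1&d1&e1&f1&g1&h1).
  destruct (H2 s t Hs) as (a2&b2&c2&d2&e2&f2&g2&h2). unfold Cadd, Cmul; simpl.
  spl8.
  - eapply dval. apply dminus; apply dmult; eauto. cbv beta; ring.
  - eapply dval. apply dplus; apply dmult; eauto. cbv beta; ring.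
  - eapply dval. apply dminus; apply dmult; eauto. cbv beta; ring.
  - eapply dval. apply dplus; apply dmult; eauto. cbv beta; ring.
  - repeat first [apply continuity_2d_pt_plus | apply continuity_2d_pt_minus | apply continuity_2d_pt_mult | apply continuity_2d_pt_opp]; auto.
  - repeat first [apply continuity_2d_pt_plus | apply continuity_2d_pt_minus | apply continuity_2d_pt_mult | apply continuity_2d_pt_opp]; auto.
  - repeat first [apply continuity_2d_pt_plus | apply continuity_2d_pt_minus | apply continuity_2d_pt_mult | apply continuity_2d_pt_opp]; auto.
  - repeat first [apply continuity_2d_pt_plus | apply continuity_2d_pt_minus | apply continuity_2d_pt_mult | apply continuity_2d_pt_opp]; auto.
Qed.

Lemma dN (X Y : R -> R) x a b : is_derive X x a -> is_derive Y x b ->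
  is_derive (fun u => X u ^ 2 + Y u ^ 2) x (2 * X x * a + 2 * Y x * b).
Proof. intros. eapply dval. eapply dext. 2: apply dplus; [apply (dmult X X)|apply (dmult Y Y)]; eauto.
  intros; simpl; ring. cbv beta; ring. Qed.

Lemma dquot (Z X Y : R -> R) x c a b : is_derive Z x c -> is_derive X x a -> is_derive Y x b ->
  X x ^ 2 + Y x ^ 2 <> 0 ->
  is_derive (fun u => Z u / (X u ^ 2 + Y u ^ 2)) x
   ((c * (X x ^ 2 + Y x ^ 2) - Z x * (2 * X x * a + 2 * Y x * b)) / (X x ^ 2 + Y x ^ 2) ^ 2).
Proof. intros HZ HX HY HN. eapply dval. eapply dext. 2: apply dmult. 2: exact HZ.
  2: apply dinv. 2: apply (dN X Y); eauto. 2: exact HN. intros; reflexivity.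
  cbv beta. field. auto. Qed.

Ltac c2 := repeat first [apply continuity_2d_pt_plus | apply continuity_2d_pt_minus
   | apply continuity_2d_pt_mult | apply continuity_2d_pt_opp | apply continuity_2d_pt_const
   | apply continuity_2d_pt_inv].

Lemma Good_inv R0 P : GoodE R0 P ->
  (forall s t, Rabs s < R0 -> fst (P (circ s t)) ^ 2 + snd (P (circ s t)) ^ 2 <> 0) ->
  GoodE R0 (fun w => Cinv (P w)).
Proof. intros [D H] HN.
  exists (fun u v => Copp (Cmul (D u v) (Cmul (Cinv (P (circ u v))) (Cinv (P (circ u v)))))).
  intros s t Hs. destruct (H s t Hs) as (a1&b1&c1&d1&e1&f1&g1&h1).
  specialize (HN s t Hs).
  unfold Copp, Cmul, Cinv; cbn [fst snd].
  spl8.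
  - eapply dval. apply (dquot (fun u => fst (P (circ u t))) (fun u => fst (P (circ u t))) (fun u => snd (P (circ u t)))); eauto.
    cbv beta. field. auto.
  - eapply dval. apply (dquot (fun u => - snd (P (circ u t))) (fun u => fst (P (circ u t))) (fun u => snd (P (circ u t)))); eauto.
    apply dopp; eassumption. cbv beta. field. auto.
  - eapply dval. apply (dquot (fun u => fst (P (circ s u))) (fun u => fst (P (circ s u))) (fun u => snd (P (circ s u)))); eauto.
    cbv beta. field. auto.
  - eapply dval. apply (dquot (fun u => - snd (P (circ s u))) (fun u => fst (P (circ s u))) (fun u => snd (P (circ s u)))); eauto.
    apply dopp; eassumption. cbv beta. field. auto.
  - unfold Rdiv. c2; auto.
  - unfold Rdiv. c2; auto.
  - unfold Rdiv. c2; auto.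
  - unfold Rdiv. c2; auto.
Qed.

Lemma ballR (x e y : R) : ball x e y -> Rabs (y - x) < e.
Proof. intros H. exact H. Qed.

Lemma locR (x R0 : R) (Q : R -> Prop) : Rabs x < R0 -> (forall y, Rabs y < R0 -> Q y) -> locally x Q.
Proof. intros Hx HQ. assert (He : 0 < R0 - Rabs x) by lra.
  exists (mkposreal _ He).
  cut (forall z : R, Rabs (z - x) < R0 - Rabs x -> Q z). { intros K y Hy. apply K. exact Hy. }
  intros z Hz. apply HQ.
  pose proof (Rabs_triang (z - x) x).
  replace (z - x + x) with z in H by ring. lra. Qed.

Lemma c2_snd (f : R -> R -> R) s t : continuity_2d_pt f s t -> continuous (fun v => f s v) t.
Proof. intros H. apply continuity_pt_filterlim.
  intros eps Heps. destruct (H (mkposreal eps Heps)) as [d Hd]. exists d; split. apply cond_pos.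
  intros x [_ Hx]. simpl in *. unfold R_dist in *. apply Hd. rewrite Rminus_eq_0, Rabs_R0; apply cond_pos. exact Hx.
Qed.

Lemma ex_der_cont (f : R -> R) x : ex_derive f x -> continuity_pt f x.
Proof. intros H; apply continuity_pt_filterlim; apply (ex_derive_continuous f x H). Qed.

Lemma circ0 t : circ 0 t = (0,0).
Proof. unfold circ; f_equal; ring. Qed.
Lemma circ_2PI s : circ s (2*PI) = circ s 0.
Proof. unfold circ; rewrite cos_2PI, sin_2PI, cos_0, sin_0; reflexivity. Qed.

Lemma MVP_fst R0 P r : GoodE R0 P -> 0 < r < R0 ->
  is_RInt (fun t => fst (P (circ r t))) 0 (2*PI) (2*PI * fst (P (0,0))).
Proof.
  intros [D HG] Hr.
  set (Phi := fun s => RInt (fun t => fst (P (circ s t))) 0 (2*PI)).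
  assert (Hint : forall s, Rabs s < R0 -> ex_RInt (fun t => fst (P (circ s t))) 0 (2*PI)).
  { intros s Hs. apply (ex_RInt_continuous (V := R_CompleteNormedModule)). intros z _. apply continuity_pt_filterlim, ex_der_cont.
    eexists. apply (HG s z Hs). }
  assert (Hder : forall s, Rabs s < R0 -> is_derive Phi s
     (RInt (fun t => Derive (fun u => fst (P (circ u t))) s) 0 (2*PI))).
  { intros s Hs. apply is_derive_RInt_param.
    - apply (locR s R0); auto. intros y Hy t _. eexists. apply (HG y t Hy).
    - intros t _. apply continuity_2d_pt_ext_loc with (f := fun u v => fst (D u v)).
      + assert (He : 0 < R0 - Rabs s) by lra. exists (mkposreal _ He). intros u v Hu _.
        simpl in Hu. symmetry. apply is_derive_unique. apply HG.
        pose proof (Rabs_triang (u - s) s). replace (u - s + s) with u in H by ring. lra.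
      + apply (HG s t Hs).
    - apply (locR s R0); auto. }
  assert (Hzero : forall s, 0 < s < R0 -> RInt (fun t => Derive (fun u => fst (P (circ u t))) s) 0 (2*PI) = 0).
  { intros s Hs. assert (Hs' : Rabs s < R0) by (rewrite Rabs_right; lra).
    rewrite (RInt_ext _ (fun t => fst (D s t))).
    2: { intros x _. apply is_derive_unique. apply (HG s x Hs'). }
    assert (H1 : is_RInt (fun v => s * fst (D s v)) 0 (2*PI)
               (minus (snd (P (circ s (2*PI)))) (snd (P (circ s 0))))).
    { apply (is_RInt_derive (fun v => snd (P (circ s v)))).
      - intros x _. apply (HG s x Hs').
      - intros x _. apply (c2_snd (fun u v => s * fst (D u v))).
        apply continuity_2d_pt_mult. apply continuity_2d_pt_const. apply (HG s x Hs'). }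
    rewrite circ_2PI, minus_eq_zero in H1.
    apply (is_RInt_scal _ _ _ (/ s)) in H1.
    assert (H2 : is_RInt (fun t => fst (D s t)) 0 (2*PI) (scal (/ s) zero)).
    { eapply is_RInt_ext. 2: exact H1.
      intros x _. unfold scal; simpl. unfold mult; simpl. field. lra. }
    rewrite (is_RInt_unique _ _ _ _ H2). unfold scal, zero; simpl. unfold mult; simpl. ring.
    }
  assert (Hc : Phi r = Phi 0).
  { destruct (MVT_gen Phi 0 r (fun _ => 0)) as [c [_ Hc]].
    - rewrite Rmin_left, Rmax_right by lra. intros x Hx.
      rewrite <- (Hzero x) by lra. apply Hder. rewrite Rabs_right; lra.
    - rewrite Rmin_left, Rmax_right by lra. intros x Hx.
      apply ex_der_cont. eexists. apply Hder. rewrite Rabs_right; lra.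
    - lra. }
  assert (H0 : Phi 0 = 2 * PI * fst (P (0,0))).
  { unfold Phi. rewrite (RInt_ext _ (fun _ => fst (P (0,0)))).
    2: { intros x _. rewrite circ0. reflexivity. }
    rewrite RInt_const. unfold scal; simpl. unfold mult; simpl. ring. }
  rewrite <- H0, <- Hc. apply (RInt_correct (V := R_CompleteNormedModule)). apply Hint. rewrite Rabs_right; lra.
Qed.

Lemma is_RInt_lin (f g : R -> R) a b A B c1 c2 :
  is_RInt f a b A -> is_RInt g a b B -> is_RInt (fun t => c1 * f t + c2 * g t) a b (c1 * A + c2 * B).
Proof. intros HA HB. apply (is_RInt_plus (fun t => c1 * f t) (fun t => c2 * g t)).
  apply (is_RInt_scal f a b c1 A HA). apply (is_RInt_scal g a b c2 B HB). Qed.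

Lemma MVP_snd R0 P r : GoodE R0 P -> 0 < r < R0 ->
  is_RInt (fun t => snd (P (circ r t))) 0 (2*PI) (2*PI * snd (P (0,0))).
Proof. intros HG Hr.
  assert (H : GoodE R0 (fun w => Cmul (0,-1) (P w))) by (apply Good_mul; auto; apply Good_const).
  pose proof (MVP_fst _ _ _ H Hr) as H1. simpl in H1.
  replace (2 * PI * snd (P (0,0))) with (2 * PI * (0 * fst (P (0, 0)) - -1 * snd (P (0, 0)))) by ring.
  eapply is_RInt_ext. 2: exact H1. intros; simpl; ring. Qed.

Lemma Cmul_assoc a b c : Cmul a (Cmul b c) = Cmul (Cmul a b) c.
Proof. destruct a, b, c; unfold Cmul; simpl; f_equal; ring. Qed.
Lemma Cmul_comm a b : Cmul a b = Cmul b a.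
Proof. destruct a, b; unfold Cmul; simpl; f_equal; ring. Qed.
Lemma Cmul_1r a : Cmul a Cone = a.
Proof. destruct a; unfold Cmul, Cone; simpl; f_equal; ring. Qed.
Lemma Cmul_1l a : Cmul Cone a = a.
Proof. destruct a; unfold Cmul, Cone; simpl; f_equal; ring. Qed.

Lemma circ_nz r t : r <> 0 -> fst (circ r t) ^ 2 + snd (circ r t) ^ 2 = r ^ 2.
Proof. intros. unfold circ; simpl. pose proof (sin2_cos2 t). unfold Rsqr in H0. nra. Qed.

Lemma circ_inv r t : r <> 0 -> Cmul (Cinv (circ r t)) (Cmul Ci (circ r t)) = Ci.
Proof. intros Hr. pose proof (circ_nz r t Hr). destruct (circ r t) as [x y]. cbn [fst snd] in H.
  assert (N : x ^ 2 + y ^ 2 <> 0) by (rewrite H; apply pow_nonzero; auto).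
  unfold Cmul, Cinv, Ci; cbn [fst snd]. f_equal; field; auto. Qed.

Lemma RInt_val_of (f : R -> R) a b v : is_RInt f a b v -> RInt_val f a b v.
Proof. intros H. exists (ex_RInt_Reals_0 _ _ _ (ex_intro _ _ H)).
  rewrite <- RInt_Reals. apply is_RInt_unique; exact H. Qed.

Lemma circ_int R0 P r K : GoodE R0 P -> 0 < r < R0 ->
  CircInt r (fun w => Cmul K (Cmul (P w) (Cinv w))) (Cmul K (Cmul (Cmul (RC (2*PI)) Ci) (P (0,0)))).
Proof. intros HG Hr.
  pose proof (MVP_fst _ _ _ HG Hr) as H1. pose proof (MVP_snd _ _ _ HG Hr) as H2.
  assert (E : forall t, Cmul (Cmul K (Cmul (P (circ r t)) (Cinv (circ r t)))) (Cmul Ci (circ r t))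
            = Cmul K (Cmul (P (circ r t)) Ci)).
  { intros t. rewrite <- !Cmul_assoc. rewrite circ_inv by lra. reflexivity. }
  destruct K as [k1 k2]. split; apply RInt_val_of.
  - eapply is_RInt_ext. intros t _. rewrite E. reflexivity.
    eapply is_RInt_ext. intros t _. unfold Cmul, Ci; simpl.
    instantiate (1 := fun t => (- k2) * fst (P (circ r t)) + (- k1) * snd (P (circ r t))). simpl. ring.
    eapply (eq_ind _ (fun v => is_RInt _ _ _ v)). apply is_RInt_lin; eauto.
    unfold Cmul, RC, Ci; simpl. ring.
  - eapply is_RInt_ext. intros t _. rewrite E. reflexivity.
    eapply is_RInt_ext. intros t _. unfold Cmul, Ci; simpl.
    instantiate (1 := fun t => k1 * fst (P (circ r t)) + (- k2) * snd (P (circ r t))). simpl. ring.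
    eapply (eq_ind _ (fun v => is_RInt _ _ _ v)). apply is_RInt_lin; eauto.
    unfold Cmul, RC, Ci; simpl. ring.
Qed.

Definition Sf (q za w : Cx) : Cx :=
  Copp (Cdiv (Csub (Csub w (Cmul q za)) (Cmul (Csub Cone q) (Cmul za w)))
             (Csub (Csub za (Cmul q w)) (Cmul (Csub Cone q) (Cmul za w)))).
Definition den (q za w : Cx) : Cx := Csub (Csub za (Cmul q w)) (Cmul (Csub Cone q) (Cmul za w)).

Lemma Sba_Sf q z b a : Sba q z b a = Sf q (z a) (z b).
Proof. reflexivity. Qed.

Lemma Good_Sf R0 q za : (forall s t, Rabs s < R0 -> fst (den q za (circ s t)) ^ 2 + snd (den q za (circ s t)) ^ 2 <> 0) ->
  GoodE R0 (Sf q za).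
Proof. intros HN. unfold Sf, Cdiv, Csub.
  apply Good_opp. apply Good_mul.
  - apply Good_add. apply Good_add. apply Good_id. apply Good_opp, Good_const.
    apply Good_opp. apply Good_mul. apply Good_const. apply Good_mul. apply Good_const. apply Good_id.
  - apply Good_inv. 2: exact HN.
    apply Good_add. apply Good_add. apply Good_const. apply Good_opp. apply Good_mul. apply Good_const. apply Good_id.
    apply Good_opp. apply Good_mul. apply Good_const. apply Good_mul. apply Good_const. apply Good_id.
Qed.

Lemma Cnorm_circ s t : Cnorm (circ s t) = Rabs s.
Proof. unfold Cnorm, circ; cbn [fst snd].
  replace ((s * cos t) ^ 2 + (s * sin t) ^ 2) with (s ^ 2).
  rewrite <- Rsqr_pow2, sqrt_Rsqr_abs. reflexivity.
  pose proof (sin2_cos2 t). unfold Rsqr in H. nra. Qed.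

Lemma Cnorm_nz z : 0 < Cnorm z -> fst z ^ 2 + snd z ^ 2 <> 0.
Proof. unfold Cnorm. intros H E. rewrite E, sqrt_0 in H. lra. Qed.

Lemma den_nz q za w : Cnorm w * (Cnorm q + Cnorm (Csub Cone q) * Cnorm za) < Cnorm za ->
  fst (den q za w) ^ 2 + snd (den q za w) ^ 2 <> 0.
Proof. intros H. apply Cnorm_nz.
  set (X := Cadd q (Cmul (Csub Cone q) za)).
  assert (E : za = Cplus (den q za w) (Cmul w X)).
  { unfold den, X, Cplus, Csub, Cadd, Copp, Cmul, Cone. destruct za, w, q; cbn [fst snd]; f_equal; ring. }
  pose proof (Cmod_triangle (den q za w) (Cmul w X)) as T. rewrite <- E in T.
  pose proof (Cmod_mult w X) as M.
  pose proof (Cmod_triangle q (Cmul (Csub Cone q) za)) as T2.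
  pose proof (Cmod_mult (Csub Cone q) za) as M2.
  change (Cmod (Cplus q (Cmul (Csub Cone q) za))) with (Cmod X) in T2.
  change (Cmod (Cmult w X)) with (Cmod (Cmul w X)) in M.
  change (Cmod (Cmult (Csub Cone q) za)) with (Cmod (Cmul (Csub Cone q) za)) in M2.
  rewrite M2 in T2. rewrite M in T.
  change Cnorm with Cmod in *.
  pose proof (Cmod_ge_0 w).
  assert (Cmod w * Cmod X <= Cmod w * (Cmod q + Cmod (Csub Cone q) * Cmod za)) by (apply Rmult_le_compat_l; lra).
  lra. Qed.

Lemma Cprod_app l1 l2 f : Cprod (l1 ++ l2) f = Cmul (Cprod l1 f) (Cprod l2 f).
Proof. induction l1; simpl. rewrite Cmul_1l; reflexivity. rewrite IHl1, Cmul_assoc; reflexivity. Qed.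

Lemma Cmul_swap4 a b c d : Cmul (Cmul a b) (Cmul c d) = Cmul (Cmul a c) (Cmul b d).
Proof. destruct a, b, c, d; unfold Cmul; simpl; f_equal; ring. Qed.

Lemma Cprod_mul l f g : Cprod l (fun a => Cmul (f a) (g a)) = Cmul (Cprod l f) (Cprod l g).
Proof. induction l; simpl. rewrite Cmul_1l; reflexivity. rewrite IHl, Cmul_swap4; reflexivity. Qed.

Lemma Cprod_ext_in l f g : (forall a, In a l -> f a = g a) -> Cprod l f = Cprod l g.
Proof. induction l; simpl; intros H; auto. rewrite H, IHl; auto. Qed.

Lemma Cprod_one l f : (forall a, In a l -> f a = Cone) -> Cprod l f = Cone.
Proof. induction l; simpl; intros H; auto. rewrite H, IHl; auto. apply Cmul_1l. Qed.

Lemma decomp (f : nat -> nat -> Cx) m : (forall a b, (b <= a)%nat -> f a b = Cone) ->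
  Cprod (seq 0 (S m)) (fun a => Cprod (seq 0 (S m)) (f a)) =
  Cmul (Cprod (seq 0 m) (fun a => Cprod (seq 0 m) (f a))) (Cprod (seq 0 m) (fun a => f a m)).
Proof. intros Hf. rewrite seq_S. simpl (0 + m)%nat.
  rewrite Cprod_app. simpl (Cprod [m] _).
  rewrite (Cprod_one _ (f m)). 2: { intros b Hb. apply Hf. apply in_app_or in Hb. destruct Hb as [Hb|Hb].
     apply in_seq in Hb; lia. destruct Hb as [<-|[]]; lia. }
  rewrite !Cmul_1r.
  rewrite (Cprod_ext_in _ _ (fun a => Cmul (Cprod (seq 0 m) (f a)) (f a m))).
  2: { intros a _. rewrite Cprod_app. simpl. rewrite Cmul_1r. reflexivity. }
  apply Cprod_mul. Qed.

Definition setz (z : nat -> Cx) (m : nat) (w : Cx) : nat -> Cx :=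
  fun k => if Nat.eqb k m then w else z k.

Lemma inner r m : 0 <= r -> forall (F G : (nat -> Cx) -> Cx) v,
  (forall z, (forall i, (i < m)%nat -> Cnorm (z i) = r) -> CircInt r (fun w => F (setz z m w)) (G z)) ->
  IterCirc r m G v -> IterCirc r (S m) F v.
Proof.
  intros Hr; induction m; intros F G v HFG HG.
  - simpl in HG. exists (fun w => F (cons_fun w (fun _ => Czero))). split.
    + intros t. reflexivity.
    + specialize (HFG (fun _ => Czero)). rewrite HG in HFG.
      replace (fun w => F (cons_fun w (fun _ => Czero))) with (fun w => F (setz (fun _ => Czero) 0 w)).
      apply HFG. intros; lia.
      apply functional_extensionality; intros w. f_equal. apply functional_extensionality; intros k.
      destruct k; reflexivity.
  - destruct HG as [g [Hg Hc]]. exists g. split; auto. intros t.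
    apply (IHm _ (fun z => G (cons_fun (circ r t) z))); auto.
    intros z Hz. specialize (HFG (cons_fun (circ r t) z)).
    replace (fun w => F (cons_fun (circ r t) (setz z m w))) with (fun w => F (setz (cons_fun (circ r t) z) (S m) w)).
    apply HFG. intros i Hi. destruct i; simpl. rewrite Cnorm_circ. apply Rabs_right.
    lra. apply Hz; lia.
    apply functional_extensionality; intros w. f_equal. apply functional_extensionality; intros k.
    destruct k; reflexivity.
Qed.

Definition Tm (q : Cx) (I : nat -> nat -> bool) (m : nat) (z : nat -> Cx) : Cx :=
  Cprod (seq 0 m) (fun a => Cprod (seq 0 m) (fun b => if I a b then Sba q z b a else Cone)).
Definition Bm q I m z := Cmul (Tm q I m z) (Cprod (seq 0 m) (fun i => Cinv (z i))).
Definition Qp (q : Cx) (I : nat -> nat -> bool) m :=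
  Cprod (seq 0 m) (fun a => Cprod (seq 0 m) (fun b => if I a b then q else Cone)).
Definition twopii := Cmul (RC (2*PI)) Ci.
Definition Prow q (I : nat -> nat -> bool) m z w :=
  Cprod (seq 0 m) (fun a => if I a m then Sf q (z a) w else Cone).
Definition Qrow (q : Cx) (I : nat -> nat -> bool) m := Cprod (seq 0 m) (fun a => if I a m then q else Cone).

Lemma Sf0 q za : 0 < Cnorm za -> Sf q za (0,0) = q.
Proof. intros H. apply Cnorm_nz in H. destruct za as [x y], q as [q1 q2]. cbn [fst snd] in H.
  unfold Sf, Cdiv, Csub, Cadd, Copp, Cmul, Cinv, Cone; cbn [fst snd].
  f_equal; field; replace ((x * 1 - y * 0 + - (q1 * 0 - q2 * 0) + - ((1 + - q1) * (x * 0 - y * 0) - (0 + - q2) * (x * 0 + y * 0))) ^ 2 +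
   (x * 0 + y * 1 + - (q1 * 0 + q2 * 0) + - ((1 + - q1) * (x * 0 + y * 0) + (0 + - q2) * (x * 0 - y * 0))) ^ 2) with (x^2+y^2) by ring; auto.
Qed.

Lemma step_eq q I m z w c (HI : forall a b, I a b = true -> (a < b)%nat) :
  Cmul c (Bm q I (S m) (setz z m w)) = Cmul (Cmul c (Bm q I m z)) (Cmul (Prow q I m z w) (Cinv w)).
Proof.
  assert (Hs : forall k, In k (seq 0 m) -> setz z m w k = z k).
  { intros k Hk. apply in_seq in Hk. unfold setz. replace (Nat.eqb k m) with false; auto.
    symmetry; apply Nat.eqb_neq; lia. }
  unfold Bm, Tm. rewrite decomp.
  2: { intros a b Hab. destruct (I a b) eqn:E; auto. apply HI in E; lia. }
  rewrite seq_S. simpl (0 + m)%nat. rewrite Cprod_app. simpl (Cprod [m] _).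
  unfold setz at 4. rewrite Nat.eqb_refl.
  rewrite (Cprod_ext_in (seq 0 m) (fun a => Cprod (seq 0 m) _) (fun a => Cprod (seq 0 m) (fun b => if I a b then Sba q z b a else Cone))).
  2: { intros a Ha. apply Cprod_ext_in. intros b Hb. destruct (I a b); auto.
       rewrite !Sba_Sf, !Hs; auto. }
  rewrite (Cprod_ext_in (seq 0 m) (fun a => if I a m then _ else _) (fun a => if I a m then Sf q (z a) w else Cone)).
  2: { intros a Ha. destruct (I a m); auto. rewrite Sba_Sf, Hs; auto. unfold setz; rewrite Nat.eqb_refl; reflexivity. }
  rewrite (Cprod_ext_in (seq 0 m) (fun i => Cinv (setz z m w i)) (fun i => Cinv (z i))).
  2: { intros; rewrite Hs; auto. }
  unfold Prow.
  generalize (Cprod (seq 0 m) (fun a => Cprod (seq 0 m) (fun b => if I a b then Sba q z b a else Cone))) as A.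
  generalize (Cprod (seq 0 m) (fun a => if I a m then Sf q (z a) w else Cone)) as Bq.
  generalize (Cprod (seq 0 m) (fun i => Cinv (z i))) as Ci'. generalize (Cinv w) as iw.
  intros. destruct c, A, Bq, Ci', iw; unfold Cmul, Cone; cbn [fst snd]; f_equal; ring.
Qed.

Lemma main_ind q I r R0 (HI : forall a b, I a b = true -> (a < b)%nat) :
  0 < r < R0 ->
  (forall za w, Cnorm za = r -> Cnorm w < R0 -> fst (den q za w) ^ 2 + snd (den q za w) ^ 2 <> 0) ->
  forall m c, IterCirc r m (fun z => Cmul c (Bm q I m z)) (Cmul c (Cmul (Cpow twopii m) (Qp q I m))).
Proof.
  intros Hr HD. induction m; intros c.
  - reflexivity.
  - apply (inner r m ltac:(lra) _ (fun z => Cmul (Cmul c (Cmul twopii (Qrow q I m))) (Bm q I m z))).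
    + intros z Hz.
      replace (fun w => Cmul c (Bm q I (S m) (setz z m w)))
        with (fun w => Cmul (Cmul c (Bm q I m z)) (Cmul (Prow q I m z w) (Cinv w))).
      2: { apply functional_extensionality; intros w; symmetry; apply step_eq; auto. }
      replace (Cmul (Cmul c (Cmul twopii (Qrow q I m))) (Bm q I m z))
        with (Cmul (Cmul c (Bm q I m z)) (Cmul (Cmul (RC (2*PI)) Ci) (Prow q I m z (0,0)))).
      apply (circ_int R0); auto.
      * unfold Prow. generalize (seq 0 m) (fun k (Hk : In k (seq 0 m)) => Hz k (proj2 (proj1 (in_seq _ _ _) Hk))).
        intros l Hl. induction l; simpl. apply Good_const.
        apply Good_mul. 2: apply IHl; intros; apply Hl; simpl; auto.
        destruct (I a m). 2: apply Good_const.
        apply Good_Sf. intros s t Hs. apply HD. apply Hl; simpl; auto. rewrite Cnorm_circ; auto.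
      * assert (E : Prow q I m z (0,0) = Qrow q I m).
        { unfold Prow, Qrow. apply Cprod_ext_in. intros a Ha. destruct (I a m); auto.
          apply Sf0. rewrite Hz. lra. apply in_seq in Ha; lia. }
        rewrite E. unfold twopii.
        generalize (Cmul (RC (2 * PI)) Ci). intros.
        destruct c, c0, (Bm q I m z), (Qrow q I m); unfold Cmul; cbn [fst snd]; f_equal; ring.
    + eapply (eq_ind _ (fun v => IterCirc r m _ v)). apply IHm.
      unfold Qp. rewrite decomp. 2: { intros a b Hab. destruct (I a b) eqn:E; auto. apply HI in E; lia. }
      fold (Qrow q I m). simpl Cpow.
      generalize twopii (Cpow twopii m) (Qrow q I m) (Cprod (seq 0 m) (fun a => Cprod (seq 0 m) (fun b => if I a b then q else Cone))).
      intros. destruct c, c0, c1, c2, c3; unfold Cmul; cbn [fst snd]; f_equal; ring.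
Qed.

Lemma Cpow_add q a b : Cpow q (a + b) = Cmul (Cpow q a) (Cpow q b).
Proof. induction a; simpl. rewrite Cmul_1l; reflexivity. rewrite IHa, Cmul_assoc; reflexivity. Qed.

Lemma Cprod_pow q l (g : nat -> nat) : Cprod l (fun a => Cpow q (g a)) = Cpow q (fold_right Nat.add O (map g l)).
Proof. induction l; simpl; auto. rewrite IHl, <- Cpow_add. reflexivity. Qed.

Lemma Qp_inv q sigma n : Qp q (is_inversion sigma) n = Cpow q (inv_count n sigma).
Proof. unfold Qp, inv_count. rewrite <- Cprod_pow. apply Cprod_ext_in. intros a _.
  rewrite <- Cprod_pow. apply Cprod_ext_in. intros b _. destruct (is_inversion sigma a b); simpl; auto.
  rewrite Cmul_1r; reflexivity. Qed.

Lemma Cpow_mul a b n : Cmul (Cpow a n) (Cpow b n) = Cpow (Cmul a b) n.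
Proof. induction n; simpl. apply Cmul_1l. rewrite <- IHn, Cmul_swap4. reflexivity. Qed.

Lemma Cpow_one n : Cpow Cone n = Cone.
Proof. induction n; simpl; auto. rewrite IHn; apply Cmul_1l. Qed.

Lemma tp_inv : Cmul (Cinv (Cmul (RC (2 * PI)) Ci)) (Cmul (RC (2 * PI)) Ci) = Cone.
Proof. pose proof PI_RGT_0. unfold Cmul, Cinv, RC, Ci, Cone; cbn [fst snd]. f_equal; field; nra. Qed.

Lemma norm_facts q r : 0 < Cnorm q -> Cnorm q < 1 -> 0 < r -> r < (1 - Cnorm q) / Cnorm (Csub Cone q) ->
  0 < Cnorm q + Cnorm (Csub Cone q) * r < 1.
Proof. intros H0 H1 Hr Hr1.
  pose proof (Cmod_triangle (Csub Cone q) q) as T.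
  replace (Cplus (Csub Cone q) q) with Cone in T by (destruct q; unfold Cplus, Csub, Cadd, Copp, Cone; cbn [fst snd]; f_equal; ring).
  change Cnorm with Cmod in *. replace (Cmod Cone) with 1 in T by (unfold Cmod, Cone; cbn [fst snd]; replace (1 ^ 2 + 0 ^ 2) with 1 by ring; rewrite sqrt_1; reflexivity).
  assert (Hp : 0 < Cmod (Csub Cone q)) by lra.
  pose proof (Cmod_ge_0 (Csub Cone q)).
  apply (Rmult_lt_compat_l (Cmod (Csub Cone q))) in Hr1; auto.
  replace (Cmod (Csub Cone q) * ((1 - Cmod q) / Cmod (Csub Cone q))) with (1 - Cmod q) in Hr1 by (field; lra).
  split; nra. Qed.

Theorem mainTheorem5 (n : nat) (q : Cx) (r : R) (sigma : list nat)
  (hn : (1 <= n)%nat)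
  (hq0 : 0 < Cnorm q) (hq1 : Cnorm q < 1)
  (hr0 : 0 < r) (hr1 : r < (1 - Cnorm q) / Cnorm (Csub Cone q))
  (hsigma : Permutation sigma (seq 0 n)) :
  exists v : Cx,
    IterCirc r n
      (fun z => Cmul (A_sigma n q sigma z) (Cprod (seq 0 n) (fun i => Cinv (z i)))) v /\
    Cmul (Cpow (Cinv (Cmul (RC (2 * PI)) Ci)) n) v = Cpow q (inv_count n sigma).
Proof.
  pose proof (norm_facts q r hq0 hq1 hr0 hr1) as [K0 K1].
  set (kap := Cnorm q + Cnorm (Csub Cone q) * r) in *.
  assert (HI : forall a b, is_inversion sigma a b = true -> (a < b)%nat).
  { intros a b H. unfold is_inversion in H. apply andb_prop in H. destruct H as [H _].
    apply Nat.ltb_lt; auto. }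
  assert (Hr : 0 < r < r / kap).
  { split; auto. apply (Rmult_lt_reg_r kap); auto. unfold Rdiv. rewrite Rmult_assoc, Rinv_l by lra. nra. }
  pose proof (main_ind q (is_inversion sigma) r (r / kap) HI Hr) as M.
  exists (Cmul Cone (Cmul (Cpow twopii n) (Qp q (is_inversion sigma) n))). split.
  - replace (fun z => Cmul (A_sigma n q sigma z) (Cprod (seq 0 n) (fun i => Cinv (z i))))
      with (fun z => Cmul Cone (Bm q (is_inversion sigma) n z)).
    apply M.
    + intros za w Hza Hw. apply den_nz. rewrite Hza. fold kap.
      apply (Rmult_lt_compat_r kap) in Hw; auto. unfold Rdiv in Hw. rewrite Rmult_assoc, Rinv_l in Hw by lra. lra.
    + apply functional_extensionality; intros z. rewrite Cmul_1l. reflexivity.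
  - rewrite Cmul_1l, Qp_inv. unfold twopii. rewrite Cmul_assoc, Cpow_mul, tp_inv, Cpow_one. apply Cmul_1l.
Qed.
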